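(* Let $G$ be a graph that is $(P_4\cup K_1, C_4)$-free and not perfect. Then $G$ is connected and there exists a partition $(V_1,V_2,V_3)$ of $V(G)$ (parts possibly empty) such that (i) $G[V_1]$ is $P_4$-free, and (ii) $V_2$ and $V_3$ are cliques of $G$.
   Context: All graphs are finite, simple and undirected. $P_n$, $C_n$, $K_n$ denote the path, cycle and complete graph on $n$ vertices; $G_1\cup G_2$ denotes the disjoint union of two graphs. For a family $\mathcal F$ of graphs, $G$ is $\mathcal F$-free if no induced subgraph of $G$ is isomorphic to a member of $\mathcal F$. For $S\subseteq V(G)$, $G[S]$ is the subgraph induced by $S$. A graph $G$ is perfect if $\chi(H)=\omega(H)$ for every induced subgraph $H$ of $G$, where $\chi$ is the chromatic number and $\omega$ the clique number. *)

(* Defs.v *)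
(* A simple graph is a symmetric irreflexive relation
   e : rel T on a finite type T (vertex set V(G) = T). *)
From mathcomp Require Import all_boot.
Set Implicit Arguments. Unset Strict Implicit. Unset Printing Implicit Defensive.

Section Graphs.
Variables (T : finType) (e : rel T).

Definition induced_in (k : nat) (h : rel 'I_k) (S : {set T}) : Prop :=
  exists f : 'I_k -> T,
    [/\ injective f, (forall i, f i \in S) & (forall i j, e (f i) (f j) = h i j)].

Definition clique (S : {set T}) : bool :=
  [forall x in S, forall y in S, (x != y) ==> e x y].

Definition omega (S : {set T}) : nat :=
  \max_(K : {set T} | (K \subset S) && clique K) #|K|.

(* G[S] admits a proper colouring with colours in {0,..,k-1}
   (colours drawn from 'I_(#|T|.+1), which suffices for any k <= #|T|) *)
Definition colorable (S : {set T}) (k : nat) : bool :=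
  [exists c : {ffun T -> 'I_#|T|.+1},
     [forall x in S, c x < k] &&
     [forall x in S, forall y in S, e x y ==> (c x != c y)]].

Definition chi (S : {set T}) : nat :=
  \big[minn/#|T|]_(k < #|T|.+1 | colorable S k) k.

Definition perfect : Prop := forall S : {set T}, chi S = omega S.

Definition connected : Prop := forall x y : T, connect e x y.

End Graphs.

Definition P4 : rel 'I_4 := fun i j => (i.+1 == j :> nat) || (j.+1 == i :> nat).
Definition P4K1 : rel 'I_5 :=
  fun i j => [&& (i < 4), (j < 4) & (i.+1 == j :> nat) || (j.+1 == i :> nat)].
Definition C4 : rel 'I_4 :=
  fun i j => (i.+1 %% 4 == j :> nat) || (j.+1 %% 4 == i :> nat).

(* Main.v *)
Require Import Defs.
From mathcomp Require Import all_boot.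
From mathcomp Require Import zify.
Set Implicit Arguments. Unset Strict Implicit. Unset Printing Implicit Defensive.

Section S.
Variables (T : finType) (e : rel T).
Hypotheses (e_sym : symmetric e) (e_irr : irreflexive e).
Hypothesis free_P4K1 : ~ induced_in e P4K1 [set: T].
Hypothesis free_C4 : ~ induced_in e C4 [set: T].

Lemma mkP4K1 a b c d z : e a b -> e b c -> e c d -> e a c = false -> e b d = false ->
  e a d = false -> e z a = false -> e z b = false -> e z c = false -> e z d = false -> False.
Proof.
move=> ab bc cd ac bd ad za zb zc zd.
have ba : e b a by rewrite e_sym.
have cb : e c b by rewrite e_sym.
have dc : e d c by rewrite e_sym.
have ca : e c a = false by rewrite e_sym.
have db : e d b = false by rewrite e_sym.
have da : e d a = false by rewrite e_sym.
have az : e a z = false by rewrite e_sym.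
have bz : e b z = false by rewrite e_sym.
have cz : e c z = false by rewrite e_sym.
have dz : e d z = false by rewrite e_sym.
apply: free_P4K1; exists (fun i : 'I_5 => nth a [:: a; b; c; d; z] i); split.
- move=> [i Hi] [j Hj] /= E; apply/val_inj => /=.
  move: i j Hi Hj E => [|[|[|[|[|i]]]]] [|[|[|[|[|j]]]]] //= _ _ E; subst;
    rewrite ?e_irr in ab bc cd ba cb dc; congruence.
- by move=> i; rewrite in_setT.
- move=> [i Hi] [j Hj].
  by move: i j Hi Hj => [|[|[|[|[|i]]]]] [|[|[|[|[|j]]]]] //= _ _; rewrite ?e_irr.
Qed.

Lemma mkC4 a b c d : a != c -> b != d -> e a b -> e b c -> e c d -> e d a -> e a c = false -> e b d = false -> False.
Proof.
move=> /eqP nac /eqP nbd ab bc cd da ac bd.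
have ba : e b a by rewrite e_sym.
have cb : e c b by rewrite e_sym.
have dc : e d c by rewrite e_sym.
have ad : e a d by rewrite e_sym.
have ca : e c a = false by rewrite e_sym.
have db : e d b = false by rewrite e_sym.
apply: free_C4; exists (fun i : 'I_4 => nth a [:: a; b; c; d] i); split.
- move=> [i Hi] [j Hj] /= E; apply/val_inj => /=.
  move: i j Hi Hj E => [|[|[|[|i]]]] [|[|[|[|j]]]] //= _ _ E; subst;
    rewrite ?e_irr in ab bc cd ba cb dc da ad; try congruence.
- by move=> i; rewrite in_setT.
- move=> [i Hi] [j Hj].
  by move: i j Hi Hj => [|[|[|[|i]]]] [|[|[|[|j]]]] //= _ _; rewrite ?e_irr.
Qed.

Lemma mkP4 (noP4 : ~ induced_in e P4 [set: T]) a b c d : e a b -> e b c -> e c d ->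
  e a c = false -> e b d = false -> e a d = false -> False.
Proof.
move=> ab bc cd ac bd ad.
have ba : e b a by rewrite e_sym.
have cb : e c b by rewrite e_sym.
have dc : e d c by rewrite e_sym.
have ca : e c a = false by rewrite e_sym.
have db : e d b = false by rewrite e_sym.
have da : e d a = false by rewrite e_sym.
apply: noP4; exists (fun i : 'I_4 => nth a [:: a; b; c; d] i); split.
- move=> [i Hi] [j Hj] /= E; apply/val_inj => /=.
  move: i j Hi Hj E => [|[|[|[|i]]]] [|[|[|[|j]]]] //= _ _ E; subst;
    rewrite ?e_irr in ab bc cd ba cb dc; congruence.
- by move=> i; rewrite in_setT.
- move=> [i Hi] [j Hj].
  by move: i j Hi Hj => [|[|[|[|i]]]] [|[|[|[|j]]]] //= _ _; rewrite ?e_irr.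
Qed.

Lemma neq_of a b x : e a x -> e b x = false -> a != b.
Proof. by move=> h1 h2; apply/eqP => E; rewrite E h2 in h1. Qed.

Lemma cliqueP (K : {set T}) :
  reflect (forall x y, x \in K -> y \in K -> x != y -> e x y) (clique e K).
Proof.
apply: (iffP forall_inP) => [H x y xK yK nxy | H x xK].
  by have /forall_inP/(_ y yK)/implyP := H x xK; apply.
by apply/forall_inP => y yK; apply/implyP; apply: H.
Qed.


Definition nb x := [set y | e x y].

Lemma out_nbr v x p q : (forall u, #|nb v| <= #|nb u|) -> e v x -> e v p -> e v q ->
  p != x -> q != x -> p != q -> e x p = false -> e x q = false ->
  exists w, [/\ e x w, e v w = false & w != v].
Proof.
move=> hmin vx vp vq px qx pq xp xq.
case: (boolP [exists w, [&& e x w, ~~ e v w & w != v]]) => [/existsP [w /and3P [h1 h2 h3]]|H].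
  by exists w; split => //; apply/negbTE.
have sub : nb x \subset (v |: nb v) :\: [set x; p; q].
  apply/subsetP => w; rewrite !inE => xw.
  have hw : (w == v) || e v w.
    move: H; rewrite negb_exists => /forallP /(_ w).
    by rewrite xw /= negb_and negbK => /orP [->|/negPn ->]; rewrite ?orbT.
  rewrite hw andbT; apply/negP => /orP [/orP [] | ] /eqP E; subst w.
  - by rewrite e_irr in xw.
  - by rewrite xp in xw.
  - by rewrite xq in xw.
have := subset_leq_card sub.
rewrite cardsD (setIidPr _); last first.
  by apply/subsetP => w; rewrite !inE => /orP [/orP [] | ] /eqP ->; rewrite ?vx ?vp ?vq orbT.
rewrite cardsU1 !inE e_irr /=.
have -> : [set x; p; q] = q |: [set x; p] by rewrite setUC.
rewrite cardsU1 cards2 !inE (negbTE qx) (eq_sym q p) (negbTE pq) (eq_sym x p) px /=.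
move=> h; exfalso.
have : 0 < #|nb v| by apply/card_gt0P; exists x; rewrite inE.
have := hmin x; move: h; rewrite /nb /= => h1 h2 h3; clear -h1 h2 h3; lia.
Qed.


Lemma esF a b : e a b = false -> e b a = false.
Proof. by rewrite e_sym. Qed.
Lemma esT a b : e a b -> e b a.
Proof. by rewrite e_sym. Qed.

Lemma noI3 v x y z : (forall u, #|nb v| <= #|nb u|) -> e v x -> e v y -> e v z ->
  x != y -> x != z -> y != z -> e x y = false -> e x z = false -> e y z = false -> False.
Proof.
move=> hmin vx vy vz nxy nxz nyz xy xz yz.
have nyx : y != x by rewrite eq_sym.
have nzx : z != x by rewrite eq_sym.
have nzy : z != y by rewrite eq_sym.
have [w [xw vw wv]] := out_nbr hmin vx vy vz nyx nzx nyz xy xz.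
have [u [yu vu uv]] := out_nbr hmin vy vx vz nxy nzy nxz (esF xy) yz.
have wy : e w y = false.
  apply/negbTE/negP => wy; exact: (mkC4 nxy wv xw wy (esT vy) vx xy (esF vw)).
have wz : e w z = false.
  apply/negbTE/negP => wz; exact: (mkC4 nxz wv xw wz (esT vz) vx xz (esF vw)).
have ux : e u x = false.
  apply/negbTE/negP => ux.
  exact: (mkC4 nyx uv yu ux (esT vx) vy (esF xy) (esF vu)).
have uz : e u z = false.
  apply/negbTE/negP => uz; exact: (mkC4 nyz uv yu uz (esT vz) vy yz (esF vu)).
case: (boolP (e w u)) => [wu|/negbTE wu].
  exact: (mkP4K1 xw wu (esT yu) (esF ux) wy xy (esF xz) (esF wz) (esF uz) (esF yz)).
exact: (mkP4K1 (esT xw) (esT vx) vz (esF vw) xz wz (esF wu) ux (esF vu) uz).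
Qed.

Lemma pat v c0 c1 c2 c3 c4 w : e v c0 -> e v c1 -> e v c2 -> e v c3 -> e v c4 ->
  e c0 c1 -> e c1 c2 -> e c2 c3 -> e c3 c4 -> e c4 c0 ->
  e c0 c2 = false -> e c1 c3 = false -> e c2 c4 = false -> e c3 c0 = false -> e c4 c1 = false ->
  e c0 w -> e v w = false -> w != v ->
  [/\ e w c2 = false, e w c3 = false & (e w c1 && ~~ e w c4 || e w c4 && ~~ e w c1)].
Proof.
move=> v0 v1 v2 v3 v4 e01 e12 e23 e34 e40 n02 n13 n24 n30 n41 c0w vw wv.
have d02 : c0 != c2 := neq_of (esT e40) n24.
have d03 : c0 != c3 := neq_of e01 (esF n13).
have d14 : c1 != c4 := neq_of e12 (esF n24).
have w2 : e w c2 = false.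
  apply/negbTE/negP => h; exact: (mkC4 d02 wv c0w h (esT v2) v0 n02 (esF vw)).
have w3 : e w c3 = false.
  apply/negbTE/negP => h; exact: (mkC4 d03 wv c0w h (esT v3) v0 (esF n30) (esF vw)).
split => //.
case: (boolP (e w c1)) => w1; case: (boolP (e w c4)) => w4 //=.
  exfalso; exact: (mkC4 d14 wv (esT w1) w4 (esT v4) v1 (esF n41) (esF vw)).
exfalso; move/negbTE: w1 => w1; move/negbTE: w4 => w4.
exact: (mkP4K1 e12 e23 e34 n13 n24 (esF n41) w1 w2 w3 w4).
Qed.

Lemma noC5 v c0 c1 c2 c3 c4 : (forall u, #|nb v| <= #|nb u|) ->
  e v c0 -> e v c1 -> e v c2 -> e v c3 -> e v c4 ->
  e c0 c1 -> e c1 c2 -> e c2 c3 -> e c3 c4 -> e c4 c0 ->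
  e c0 c2 = false -> e c1 c3 = false -> e c2 c4 = false -> e c3 c0 = false -> e c4 c1 = false ->
  False.
Proof.
move=> hmin v0 v1 v2 v3 v4 e01 e12 e23 e34 e40 n02 n13 n24 n30 n41.
have d20 : c2 != c0 := neq_of e23 (esF n30).
have d30 : c3 != c0 := neq_of (esT e23) n02.
have d23 : c2 != c3 := neq_of (esT e12) (esF n13).
have [w [c0w vw wv]] := out_nbr hmin v0 v2 v3 d20 d30 d23 n02 (esF n30).
have [w2 w3 /orP [/andP [w1 /negbTE w4]|/andP [w4 /negbTE w1]]] :=
  pat v0 v1 v2 v3 v4 e01 e12 e23 e34 e40 n02 n13 n24 n30 n41 c0w vw wv.
- have d03 : c0 != c3 := neq_of e01 (esF n13).
  have d13 : c1 != c3 := neq_of (esT e01) n30.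
  have d01 : c0 != c1 := neq_of (esT e40) (esF n41).
  have [u [c3u vu uv]] := out_nbr hmin v3 v0 v1 d03 d13 d01 n30 (esF n13).
  have [u0 u1 /orP [/andP [u4 /negbTE u2]|/andP [u2 /negbTE u4]]] :=
    pat v3 v4 v0 v1 v2 e34 e40 e01 e12 e23 n30 n41 n02 n13 n24 c3u vu uv.
  +
    case: (boolP (e w u)) => [wu|/negbTE wu].
      have dw4 : w != c4 := neq_of w1 n41.
      have du0 : u != c0 := neq_of (esT c3u) (esF n30).
      exact: (mkC4 dw4 du0 wu u4 e40 c0w w4 u0).
    exact: (mkP4K1 (esT c0w) (esT e40) (esT u4) w4 (esF u0) wu (esF w2) (esF n02) n24 (esF u2)).
  +
    case: (boolP (e w u)) => [wu|/negbTE wu].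
      have dw2 : w != c2 := neq_of (esT c0w) (esF n02).
      have du1 : u != c1 := neq_of (esT c3u) n13.
      exact: (mkC4 dw2 du1 wu u2 (esT e12) (esT w1) w2 u1).
    exact: (mkP4K1 w1 e12 (esT u2) w2 (esF u1) wu (esF w4) n41 (esF n24) (esF u4)).
- have d42 : c4 != c2 := neq_of e40 (esF n02).
  have d02 : c0 != c2 := neq_of (esT e40) n24.
  have d40 : c4 != c0 := neq_of (esT e34) (esF n30).
  have [u [c2u vu uv]] := out_nbr hmin v2 v4 v0 d42 d02 d40 n24 (esF n02).
  have [u4 u0 /orP [/andP [u3 /negbTE u1]|/andP [u1 /negbTE u3]]] :=
    pat v2 v3 v4 v0 v1 e23 e34 e40 e01 e12 n24 n30 n41 n02 n13 c2u vu uv.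
  +
    case: (boolP (e w u)) => [wu|/negbTE wu].
      have dw3 : w != c3 := neq_of (esT c0w) n30.
      have d4u : c4 != u := neq_of e40 u0.
      exact: (mkC4 dw3 d4u w4 (esT e34) (esT u3) (esT wu) w3 (esF u4)).
    exact: (mkP4K1 w4 (esT e34) (esT u3) w3 (esF u4) wu (esF w1) (esF n41) n13 (esF u1)).
  +
    case: (boolP (e w u)) => [wu|/negbTE wu].
      have dw1 : w != c1 := neq_of w4 (esF n41).
      have d0u : c0 != u := neq_of (esT e40) u4.
      exact: (mkC4 dw1 d0u (esT c0w) e01 (esT u1) (esT wu) w1 (esF u0)).
    exact: (mkP4K1 (esT c0w) e01 (esT u1) w1 (esF u0) wu (esF w3) n30 (esF n13) (esF u3)).
Qed.

Lemma two_cliques (P : {set T})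
  (nI3 : forall x y z, x \in P -> y \in P -> z \in P -> x != y -> x != z -> y != z ->
     e x y = false -> e x z = false -> e y z = false -> False)
  (nC5 : forall c0 c1 c2 c3 c4, c0 \in P -> c1 \in P -> c2 \in P -> c3 \in P -> c4 \in P ->
     e c0 c1 -> e c1 c2 -> e c2 c3 -> e c3 c4 -> e c4 c0 ->
     e c0 c2 = false -> e c1 c3 = false -> e c2 c4 = false -> e c3 c0 = false ->
     e c4 c1 = false -> False) :
  exists V2 V3 : {set T}, [/\ V2 :|: V3 = P, [disjoint V2 & V3], clique e V2 & clique e V3].
Proof.
case: (boolP (clique e P)) => [cP|ncP].
  exists P, set0; split => //; first by rewrite setU0.
    by rewrite disjoints_subset setC0 subsetT.
  by apply/cliqueP => x y; rewrite inE.
have [x [y [xP yP nxy xy]]] : exists x y, [/\ x \in P, y \in P, x != y & e x y = false].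
  case/forallPn: ncP => x; rewrite negb_imply => /andP [xP /forallPn [y]].
  rewrite negb_imply => /andP [yP]; rewrite negb_imply => /andP [nxy /negbTE xy].
  by exists x, y.
pose A := [set a in P | (a != x) && ~~ e x a].
pose V2 := [set u in P | (u != x) && [forall a in A, (a != u) ==> e a u]].
have V2P : V2 \subset P by apply/subsetP => u; rewrite inE => /andP [].
have yA : y \in A by rewrite inE yP eq_sym nxy xy.
have AP a : a \in A -> a \in P by rewrite inE => /andP [].
have Acl a b : a \in A -> b \in A -> a != b -> e a b.
  rewrite !inE => /and3P [aP ax xa] /and3P [bP bx xb] nab.
  apply/negPn/negP => /negbTE ab.
  by apply: (nI3 x a b) => //; rewrite 1?eq_sym //; apply/negbTE.
exists V2, (P :\: V2); split.
- by rewrite -{1}(setIidPr V2P) setID.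
- rewrite disjoints_subset; apply/subsetP => u; by rewrite !inE => ->.
- apply/cliqueP => u1 u2; rewrite !inE => /and3P [u1P u1x /forall_inP H1].
  move=> /and3P [u2P u2x /forall_inP H2] n12.
  case: (boolP (u1 \in A)) => u1A; first exact: (implyP (H2 u1 u1A) n12).
  case: (boolP (u2 \in A)) => u2A.
    by rewrite e_sym; apply: (implyP (H1 u2 u2A)); rewrite eq_sym.
  have xu1 : e x u1 by move: u1A; rewrite inE u1P u1x /= negbK.
  have xu2 : e x u2 by move: u2A; rewrite inE u2P u2x /= negbK.
  have yu1 : e y u1 by apply: (implyP (H1 y yA)); apply/eqP => E; rewrite E xu1 in xy.
  have yu2 : e y u2 by apply: (implyP (H2 y yA)); apply/eqP => E; rewrite E xu2 in xy.
  apply/negPn/negP => /negbTE n12e.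
  exact: (mkC4 nxy n12 xu1 (esT yu1) yu2 (esT xu2) xy n12e).
- have V3P u : u \in P :\: V2 -> u != x ->
      e x u /\ exists a, [/\ a \in A, a != u & e a u = false].
    rewrite !inE => /andP [nV2 uP] ux; move: nV2; rewrite uP ux /= => nV2.
    have xu : e x u.
      apply/negPn/negP => xu; move/negP: nV2; apply; apply/forall_inP => a aA.
      by apply/implyP => au; apply: Acl => //; rewrite inE uP ux xu.
    split => //; case/forallPn: nV2 => a; rewrite negb_imply => /andP [aA].
    by rewrite negb_imply => /andP [au /negbTE ua]; exists a.
  have claim p q a : p \in P -> q \in P -> e x p -> e x q -> p != q -> e p q = false ->
      e y p = false -> e y q -> a \in A -> a != q -> e a q = false -> False.
    move=> pP qP xp xq npq pq yp yq aA naq aq.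
    have nay : a != y by apply/eqP => E; rewrite E yq in aq.
    have ay : e a y := Acl a y aA yA nay.
    have xa : e x a = false by move: aA; rewrite inE => /and3P [_ _ /negbTE].
    have npa : p != a := neq_of (esT xp) (esF xa).
    have pa : e p a.
      apply/negPn/negP => /negbTE pa.
      exact: (nI3 p a q pP (AP a aA) qP npa npq naq pa pq aq).
    exact: (nC5 a y q x p (AP a aA) yP qP xP pP ay yq (esT xq) xp pa aq (esF xy) (esF pq) xa (esF yp)).
  apply/cliqueP => u1 u2 u1V u2V n12.
  have [E1|n1x] := eqVneq u1 x.
    have n2x : u2 != x by rewrite -E1 eq_sym.
    by rewrite E1; case: (V3P u2 u2V n2x).
  have [E2|n2x] := eqVneq u2 x.
    by rewrite E2 e_sym; case: (V3P u1 u1V n1x).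
  have [xu1 [a1 [a1A na1 a1u]]] := V3P u1 u1V n1x.
  have [xu2 [a2 [a2A na2 a2u]]] := V3P u2 u2V n2x.
  have u1P : u1 \in P by move: u1V; rewrite inE => /andP [].
  have u2P : u2 \in P by move: u2V; rewrite inE => /andP [].
  apply/negPn/negP => /negbTE n12e.
  case: (boolP (e y u1)) => yu1; case: (boolP (e y u2)) => yu2.
  + exact: (mkC4 nxy n12 xu1 (esT yu1) yu2 (esT xu2) xy n12e).
  + have n21 : u2 != u1 by rewrite eq_sym.
    exact: (claim u2 u1 a1 u2P u1P xu2 xu1 n21 (esF n12e) (negbTE yu2) yu1 a1A na1 a1u).
  + exact: (claim u1 u2 a2 u1P u2P xu1 xu2 n12 n12e (negbTE yu1) yu2 a2A na2 a2u).
  + have ny1 : y != u1 by apply/eqP => E; rewrite E xu1 in xy.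
    have ny2 : y != u2 by apply/eqP => E; rewrite E xu2 in xy.
    exact: (nI3 y u1 u2 yP u1P u2P ny1 ny2 n12 (negbTE yu1) (negbTE yu2) n12e).
Qed.

Lemma partition_ex : exists V1 V2 V3 : {set T},
    [/\ V1 :|: V2 :|: V3 = [set: T],
        [&& [disjoint V1 & V2], [disjoint V1 & V3] & [disjoint V2 & V3]],
        ~ induced_in e P4 V1,
        clique e V2 & clique e V3].
Proof.
case: (pickP T) => [t0 _ | T0]; last first.
  exists [set: T], set0, set0; split.
  - by rewrite !setU0.
  - by rewrite !disjoints_subset setC0 !subsetT.
  - by move=> [f _]; have := T0 (f ord0).
  - by apply/cliqueP => x y; rewrite inE.
  - by apply/cliqueP => x y; rewrite inE.
case: (@arg_minnP T t0 xpredT (fun u => #|nb u|) isT) => v _ hmin0.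
have hmin u : #|nb v| <= #|nb u| := hmin0 u isT.
have [V2 [V3 [U D C2 C3]]] : exists V2 V3 : {set T},
    [/\ V2 :|: V3 = nb v, [disjoint V2 & V3], clique e V2 & clique e V3].
  apply: two_cliques.
    move=> x y z; rewrite !inE => vx vy vz; exact: noI3 hmin vx vy vz.
  move=> c0 c1 c2 c3 c4; rewrite !inE => v0 v1 v2 v3 v4.
  exact: noC5 hmin v0 v1 v2 v3 v4.
exists (~: nb v), V2, V3; split => //.
- by rewrite -setUA U setUC setUCr.
- by rewrite !disjoints_subset !setCS -U subsetUl subsetUr /= -disjoints_subset.
- move=> [f [_ fV Hf]].
  have f0 := Hf (@Ordinal 4 0 isT) (@Ordinal 4 1 isT).
  have f1 := Hf (@Ordinal 4 1 isT) (@Ordinal 4 2 isT).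
  have f2 := Hf (@Ordinal 4 2 isT) (@Ordinal 4 3 isT).
  have g0 := Hf (@Ordinal 4 0 isT) (@Ordinal 4 2 isT).
  have g1 := Hf (@Ordinal 4 1 isT) (@Ordinal 4 3 isT).
  have g2 := Hf (@Ordinal 4 0 isT) (@Ordinal 4 3 isT).
  have vf i : e v (f i) = false by have := fV i; rewrite !inE => /negbTE.
  exact: (mkP4K1 f0 f1 f2 g0 g1 g2 (vf _) (vf _) (vf _) (vf _)).
Qed.

Lemma omega_mono (A B : {set T}) : A \subset B -> omega e A <= omega e B.
Proof.
move=> AB; apply/bigmax_leqP => K /andP [KA cK]; apply: leq_bigmax_cond.
by rewrite cK andbT (subset_trans KA AB).
Qed.

Lemma omega_leT S : omega e S <= #|T|.
Proof. by apply/bigmax_leqP => K _; exact: max_card. Qed.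

Lemma omega_le_col S k : colorable e S k -> omega e S <= k.
Proof.
move=> /existsP [c /andP [/forall_inP Hlt /forall_inP Hpr]].
apply/bigmax_leqP => K /andP [KS /cliqueP cK].
case: (set_0Vmem K) => [->|[x0 x0K]]; first by rewrite cards0.
have k0 : 0 < k := leq_ltn_trans (leq0n _) (Hlt x0 (subsetP KS x0 x0K)).
pose g (x : T) : 'I_k.-1.+1 := inord (c x).
rewrite (_ : k = #|'I_k.-1.+1|); last by rewrite card_ord prednK.
apply: (leq_card_in g) => x y xK yK.
have xS := subsetP KS x xK; have yS := subsetP KS y yK.
rewrite /g => /(congr1 (@nat_of_ord _)); rewrite !inordK ?prednK ?Hlt // => /val_inj cxy.
apply/eqP; apply: contraT => nxy.
have := forall_inP (Hpr x xS) y yS; rewrite cK // cxy eqxx.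
by [].
Qed.

Lemma bigminn_le (I : finType) (P : pred I) (F : I -> nat) x j :
  P j -> \big[minn/x]_(i | P i) F i <= F j.
Proof.
move=> Pj; have : j \in index_enum I := mem_index_enum j.
elim: (index_enum I) => [//|i r IH]; rewrite inE big_cons.
case/orP => [/eqP Eji|jr]; first by rewrite -Eji Pj geq_minl.
by case: (P i); rewrite ?geq_min IH ?orbT.
Qed.

Lemma chi_eq S : colorable e S (omega e S) -> chi e S = omega e S.
Proof.
move=> H; rewrite /chi; apply/eqP; rewrite eqn_leq; apply/andP; split.
  have Ho : omega e S < #|T|.+1 by rewrite ltnS omega_leT.
  exact: (@bigminn_le _ (fun k : 'I_#|T|.+1 => colorable e S k) (fun k => nat_of_ord k)
            #|T| (Ordinal Ho) H).
apply: (big_ind (fun y => omega e S <= y)); first exact: omega_leT.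
  by move=> a b ha hb; rewrite leq_min ha hb.
by move=> k Hk; exact: omega_le_col.
Qed.

Lemma col_omega (noP4 : ~ induced_in e P4 [set: T]) S : colorable e S (omega e S).
Proof.
have [n] := ubnP #|S|; elim: n S => // n IH S; rewrite ltnS => Sn.
case: (boolP [exists X : {set T}, [&& X \subset S, X != set0, X != S &
          [forall x in X, forall y in S :\: X, ~~ e x y]]]).
  case/existsP => X /and4P [XS X0 XS' /forall_inP sep].
  have sepP x y : x \in X -> y \in S -> y \notin X -> e x y = false.
    move=> xX yS yX; apply/negbTE.
    by have := forall_inP (sep x xX) y; rewrite !inE yX yS; apply.
  have lt1 : #|X| < #|S| by apply: proper_card; rewrite properEneq XS XS'.
  have lt2 : #|S :\: X| < #|S|.
    apply: proper_card; rewrite properEneq subsetDl andbT.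
    case/set0Pn: X0 => x0 x0X; apply/eqP => E.
    have : x0 \in S :\: X by rewrite E (subsetP XS).
    by rewrite inE x0X.
  have /existsP [c1 /andP [/forall_inP L1 /forall_inP P1]] := IH X (leq_trans lt1 Sn).
  have /existsP [c2 /andP [/forall_inP L2 /forall_inP P2]] :=
    IH (S :\: X) (leq_trans lt2 Sn).
  have m1 := omega_mono XS; have m2 := omega_mono (subsetDl S X).
  apply/existsP; exists [ffun x => if x \in X then c1 x else c2 x]; apply/andP; split.
    apply/forall_inP => x xS; rewrite ffunE; case: ifP => xX.
      exact: leq_trans (L1 x xX) m1.
    by apply: leq_trans (L2 x _) m2; rewrite inE xX xS.
  apply/forall_inP => x xS; apply/forall_inP => y yS; apply/implyP => exy; rewrite !ffunE.
  case: ifP => xX; case: ifP => yX.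
  - exact: (implyP (forall_inP (P1 x xX) y yX) exy).
  - by rewrite sepP ?yX in exy.
  - by rewrite e_sym sepP ?xX in exy.
  - have xS' : x \in S :\: X by rewrite inE xX xS.
    have yS' : y \in S :\: X by rewrite inE yX yS.
    exact: (implyP (forall_inP (P2 x xS') y yS') exy).
move=> nosep.
case: (set_0Vmem S) => [-> | [x0 x0S]].
  by apply/existsP; exists [ffun=> ord0]; apply/andP; split; apply/forall_inP => x; rewrite inE.
case: (@arg_maxnP T x0 (fun x => x \in S) (fun u => #|nb u :&: S|) x0S) => u uS umax.
have {}uS : u \in S := uS.
have univ w : w \in S -> w != u -> e u w.
  move=> wS wu; apply/negPn/negP => /negbTE uw.
  pose X := [set x in S | (x == u) || e u x].
  have sepF : ~~ [forall x in X, forall y in S :\: X, ~~ e x y].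
    apply/negP => H; move/negP: nosep; apply; apply/existsP; exists X.
    apply/and4P; split => //.
    - by apply/subsetP => z; rewrite inE => /andP [].
    - by apply/set0Pn; exists u; rewrite inE uS eqxx.
    - apply/eqP => E; have : w \in X by rewrite E.
      by rewrite inE wS (negbTE wu) uw.
  case/forallPn: sepF => x; rewrite negb_imply => /andP [xX /forallPn [y]].
  rewrite negb_imply negbK => /andP [yX' exy].
  move: yX'; rewrite !inE negb_and negb_or => /andP [/orP [/negP yS0 //|/andP [yu /negbTE uy]] yS].
  move: xX; rewrite inE => /andP [xS /orP [/eqP xu|ux]].
    by rewrite xu uy in exy.
  have xnu : x != u by apply/eqP => E; rewrite E e_irr in ux.
  have [z [zS uz xz zx]] : exists z, [/\ z \in S, e u z, e x z = false & z != x].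
    case: (boolP [exists z, [&& z \in S, e u z, ~~ e x z & z != x]]).
      by case/existsP => z /and4P [zS uz /negbTE xz zx]; exists z.
    rewrite negb_exists => /forallP H; exfalso.
    have sub : u |: (y |: ((nb u :&: S) :\ x)) \subset nb x :&: S.
      apply/subsetP => t; rewrite !inE => /or3P [/eqP ->|/eqP ->|/and3P [tx ut tS]].
      - by rewrite uS andbT e_sym.
      - by rewrite exy yS.
      - rewrite tS andbT; have := H t; rewrite tS ut tx /= andbT negbK; exact.
    have := subset_leq_card sub.
    rewrite cardsU1 !inE e_irr /= cardsU1 !inE uy /= andbF /=.
    rewrite orbF andbF (eq_sym u y) yu /=.
    have hD := cardsD1 x (nb u :&: S); rewrite !inE ux xS /= in hD.
    have := umax x xS; move=> h1 h2; clear -h1 h2 hD; lia.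
  case: (boolP (e z y)) => [zy|/negbTE zy].
    have uny : u != y by rewrite eq_sym.
    exact: (mkC4 zx uny (esT uz) ux exy (esT zy) (esF xz) uy).
  exact: (mkP4 noP4 (esT uz) ux exy (esF xz) uy zy).
have lt : #|S :\ u| < #|S| by rewrite [#|S|](cardsD1 u) uS.
have /existsP [c' /andP [/forall_inP L' /forall_inP P']] := IH (S :\ u) (leq_trans lt Sn).
have om : omega e (S :\ u) < omega e S.
  have hA : 0 < #|[pred K : {set T} | (K \subset S :\ u) && clique e K]|.
    apply/card_gt0P; exists set0; rewrite inE sub0set /=.
    by apply/cliqueP => a b; rewrite inE.
  have [K KA EK] := eq_bigmax_cond (fun K : {set T} => #|K|) hA.
  have EK' : omega e (S :\ u) = #|K| by rewrite /omega; exact: EK.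
  move: KA; rewrite inE => /andP [KS /cliqueP cK].
  have uK : u \notin K by apply/negP => /(subsetP KS); rewrite !inE eqxx.
  rewrite EK'; apply: leq_trans (_ : #|u |: K| <= _).
    by rewrite cardsU1 uK.
  apply: leq_bigmax_cond; apply/andP; split.
    apply/subsetP => t; rewrite !inE => /orP [/eqP ->|/(subsetP KS)]; first exact: uS.
    by rewrite !inE => /andP [].
  apply/cliqueP => a b; rewrite !inE => /orP [/eqP ->|aK] /orP [/eqP ->|bK] nab.
  - by rewrite eqxx in nab.
  - apply: univ; first by have := subsetP KS b bK; rewrite inE => /andP [].
    by apply/eqP => E; rewrite -E bK in uK.
  - rewrite e_sym; apply: univ; first by have := subsetP KS a aK; rewrite inE => /andP [].
    by apply/eqP => E; rewrite -E aK in uK.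
  - exact: cK.
have omT : omega e (S :\ u) < #|T|.+1 by rewrite ltnS omega_leT.
apply/existsP; exists [ffun x => if x == u then inord (omega e (S :\ u)) else c' x].
apply/andP; split.
  apply/forall_inP => x xS; rewrite ffunE; case: eqP => [_|/eqP xu].
    by rewrite inordK.
  by apply: ltn_trans om; apply: L'; rewrite !inE xu xS.
apply/forall_inP => x xS; apply/forall_inP => y yS; apply/implyP => exy; rewrite !ffunE.
case: (eqVneq x u) => [Ex|xu]; case: (eqVneq y u) => [Ey|yu].
- by rewrite Ex Ey e_irr in exy.
- have := L' y; rewrite !inE yu yS => /(_ isT) h.
  by apply/eqP => E; move: h; rewrite -E inordK // ltnn.
- have := L' x; rewrite !inE xu xS => /(_ isT) h.
  by apply/eqP => E; move: h; rewrite E inordK // ltnn.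
- have xS' : x \in S :\ u by rewrite !inE xu xS.
  have yS' : y \in S :\ u by rewrite !inE yu yS.
  exact: (implyP (forall_inP (P' x xS') y yS') exy).
Qed.

Lemma conn_of (np : ~ perfect e) : connected e.
Proof.
move=> x y; apply/negPn/negP => nxy; apply: np => S; apply: chi_eq.
apply: col_omega => -[f [_ _ Hf]].
have f0 := Hf (@Ordinal 4 0 isT) (@Ordinal 4 1 isT).
have f1 := Hf (@Ordinal 4 1 isT) (@Ordinal 4 2 isT).
have f2 := Hf (@Ordinal 4 2 isT) (@Ordinal 4 3 isT).
have g0 := Hf (@Ordinal 4 0 isT) (@Ordinal 4 2 isT).
have g1 := Hf (@Ordinal 4 1 isT) (@Ordinal 4 3 isT).
have g2 := Hf (@Ordinal 4 0 isT) (@Ordinal 4 3 isT).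
rewrite /P4 /= in f0 f1 f2 g0 g1 g2.
have cs := sym_connect_sym e_sym.
have c0 : connect e (f (@Ordinal 4 0 isT)) (f (@Ordinal 4 0 isT)) := connect0 _ _.
have c1 := connect1 f0.
have c2 := connect_trans c1 (connect1 f1).
have c3 := connect_trans c2 (connect1 f2).
have [z nz] : exists z, ~~ connect e (f (@Ordinal 4 0 isT)) z.
  case: (boolP (connect e (f (@Ordinal 4 0 isT)) x)) => hx; last by exists x.
  case: (boolP (connect e (f (@Ordinal 4 0 isT)) y)) => hy; last by exists y.
  by move/negP: nxy; case; apply: connect_trans _ hy; rewrite cs.
have nb0 i : connect e (f (@Ordinal 4 0 isT)) (f i) -> e z (f i) = false.
  move=> ci; apply/negbTE/negP => h; move/negP: nz; apply.
  exact: connect_trans ci (connect1 (esT h)).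
exact: (mkP4K1 f0 f1 f2 g0 g1 g2 (nb0 _ c0) (nb0 _ c1) (nb0 _ c2) (nb0 _ c3)).
Qed.

End S.

Unset Implicit Arguments.

Theorem theorem3p1 (T : finType) (e : rel T)
  (e_sym : symmetric e) (e_irr : irreflexive e)
  (free_P4K1 : ~ induced_in e P4K1 [set: T])
  (free_C4 : ~ induced_in e C4 [set: T])
  (not_perfect : ~ perfect e) :
  connected e /\
  exists V1 V2 V3 : {set T},
    [/\ V1 :|: V2 :|: V3 = [set: T],
        [&& [disjoint V1 & V2], [disjoint V1 & V3] & [disjoint V2 & V3]],
        ~ induced_in e P4 V1,
        clique e V2 & clique e V3].
Proof.
split; first exact: (conn_of e_sym e_irr free_P4K1 free_C4 not_perfect).
exact: (partition_ex e_sym e_irr free_P4K1 free_C4).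
Qed.
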